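(* Quet's sequence $A$ is a permutation of $\mathbb{N}$; that is, $A:\mathbb{N}\to\mathbb{N}$ is a bijection.
   Context: $\mathbb{N}=\{0,1,2,\dots\}$. Quet's sequence $A:\mathbb{N}\to\mathbb{N}$ is defined by $A(0)=0$, $A(1)=1$, and for $n\ge1$, $A(n+1)$ is the least natural number such that $A(n+1)\notin\{A(0),\dots,A(n)\}$ and $\sum_{0\le i\le n+1}A(i)\equiv 0 \pmod{n}$. First values: $A=0,1,2,3,6,4,9,5,12,14,7,17,8,20,\dots$. *)

(* Defs.v *)
From mathcomp Require Import all_boot.
Set Implicit Arguments. Unset Strict Implicit. Unset Printing Implicit Defensive.

Definition quet_ok (a : nat -> nat) (n v : nat) : Prop :=
  (forall i, i <= n -> a i <> v) /\ n %| (\sum_(0 <= i < n.+1) a i) + v.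

Definition IsQuet (a : nat -> nat) : Prop :=
  a 0 = 0 /\ a 1 = 1 /\
  forall n, 1 <= n ->
    quet_ok a n (a n.+1) /\ (forall v, quet_ok a n v -> a n.+1 <= v).

(* Main.v *)
Require Import Defs.
From mathcomp Require Import all_boot zify.

From Stdlib Require Import Classical.
Definition Pn (m : nat) (s : seq nat) : pred nat :=
  fun v => (v \notin s) && (m.+1 %| \sum_(x <- s) x + v).

Lemma Pn_ex m s : exists v, Pn m s v.
Proof.
set S := \sum_(x <- s) x.
set M := \max_(x <- s) x.
exists (m.+1 * (S + M + 1) - S).
apply/andP; split.
  apply/negP=> Hin; have H := @leq_bigmax_seq _ s predT (fun x : nat => x) _ Hin isT.
  rewrite -/M in H. move: H. nia.
have -> : S + (m.+1 * (S + M + 1) - S) = m.+1 * (S + M + 1) by nia.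
exact: dvdn_mulr.
Qed.

Definition nxt m s := ex_minn (Pn_ex m s).

Fixpoint pre k : seq nat :=
  if k is k'.+1 then rcons (pre k') (nxt k' (pre k')) else [:: 0; 1].

Definition qa i := if i is j.+1 then last 0 (pre j) else 0.

Lemma pre_map k : pre k = [seq qa i | i <- iota 0 k.+2].
Proof.
elim: k => [//|k IH].
have -> : pre k.+1 = rcons (pre k) (nxt k (pre k)) by [].
rewrite -cats1 {1}IH.
have -> : iota 0 k.+3 = iota 0 k.+2 ++ iota k.+2 1 by rewrite -iotaD addn1.
rewrite map_cat; congr (_ ++ _).
by rewrite /= /qa /= last_rcons.
Qed.

Lemma qa_quet : IsQuet qa.
Proof.
split=> //; split=> // n n1.
case: n n1 => [//|k] _.
have E : qa k.+2 = nxt k (pre k) by rewrite /qa /= last_rcons.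
have eqv : forall v, quet_ok qa k.+1 v <-> Pn k (pre k) v.
  move=> v; rewrite /Pn pre_map big_map /quet_ok /index_iota subn0.
  split.
    move=> [Hne Hd]; apply/andP; split=> //.
    apply/negP=> /mapP [i]; rewrite mem_iota => /andP [_ Hi] Hv.
    by apply: (Hne i); [lia | rewrite Hv].
  move=> /andP [Hn Hd]; split=> // i Hi Hv; apply/negP: Hn; rewrite negbK.
  by apply/mapP; exists i; [rewrite mem_iota; lia | rewrite Hv].
rewrite E /nxt; case: ex_minnP => v Pv Hmin.
split; first by apply/eqv.
by move=> w /eqv; apply: Hmin.
Qed.

Section Q.
Variable a : nat -> nat.
Hypothesis Ha : IsQuet a.

Definition T n := \sum_(0 <= i < n.+1) a i.

Lemma TS n : T n.+1 = T n + a n.+1.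
Proof. by rewrite /T big_nat_recr. Qed.

Definition Inv n Q := T n = (n-1)*Q /\ (forall i, i <= n -> a i < Q + n)
  /\ (forall v, v < Q -> exists i, i <= n /\ a i = v).

Definition used n v := exists i, i <= n /\ a i = v.

Lemma step n Q : 2 <= n -> Inv n Q ->
  (used n Q -> Inv n.+1 Q.+1) /\ (~ used n Q -> a n.+1 = Q /\ Inv n.+1 Q).
Proof.
move=> n2 [HT [Hlt Hus]].
have [[Hne Hd] Hmin] := (proj2 (proj2 Ha)) n (ltnW n2).
have Hdiv : n %| T n + a n.+1 by [].
have c1 : quet_ok a n (Q + n).
  split; first by move=> i /Hlt; lia.
  rewrite -/(T n) HT; have -> : (n - 1) * Q + (Q + n) = n * Q.+1 by lia.
  exact: dvdn_mulr.
have le1 := Hmin _ c1.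
have ge1 : Q <= a n.+1.
  rewrite leqNgt; apply/negP=> /Hus [i [Hi Hai]]; exact: (Hne i Hi Hai).
split.
- move=> [j [Hj Haj]].
  have neQ : a n.+1 <> Q by move=> E; apply: (Hne j Hj); lia.
  have E : a n.+1 = Q + n.
    move: Hdiv; rewrite HT.
    have -> : (n - 1) * Q + a n.+1 = n * Q + (a n.+1 - Q) by lia.
    rewrite dvdn_addr ?dvdn_mulr // => /dvdn_leq; lia.
  split; first by rewrite TS HT E /=; lia.
  split; first by move=> i; rewrite leq_eqVlt => /orP [/eqP ->|/Hlt]; lia.
  move=> v Hv; case: (ltnP v Q) => Hv'.
    by have [i [Hi Hai]] := Hus v Hv'; exists i; split=> //; lia.
  by exists j; split; [lia | lia].
- move=> Hnu.
  have c0 : quet_ok a n Q.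
    split; first by move=> i Hi Hai; apply: Hnu; exists i.
    rewrite -/(T n) HT; have -> : (n - 1) * Q + Q = n * Q by lia.
    exact: dvdn_mulr.
  have E : a n.+1 = Q by have := Hmin _ c0; lia.
  split=> //.
  split; first by rewrite TS HT E /=; lia.
  split; first by move=> i; rewrite leq_eqVlt => /orP [/eqP ->|/Hlt]; lia.
  by move=> v /Hus [i [Hi Hai]]; exists i; split=> //; lia.
Qed.

Lemma base : Inv 2 3.
Proof.
have [H0 [H1 Hs]] := Ha.
have [[Hne _] Hmin] := Hs 1 (leqnn 1).
have c : quet_ok a 1 2.
  split; last by rewrite dvd1n.
  move=> i; rewrite leq_eqVlt => /orP [/eqP ->|]; first by rewrite H1.
  by rewrite ltnS leqn0 => /eqP ->; rewrite H0.
have le2 := Hmin _ c.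
have n0 := Hne 0 isT; have n1 := Hne 1 isT.
rewrite H0 in n0; rewrite H1 in n1.
have E : a 2 = 2 by lia.
split; first by rewrite /T !big_nat_recr //= big_geq // H0 H1 E.
split.
  move=> i; rewrite leq_eqVlt => /orP [/eqP ->|]; first by rewrite E.
  rewrite ltnS leq_eqVlt => /orP [/eqP ->|]; first by rewrite H1.
  by rewrite ltnS leqn0 => /eqP ->; rewrite H0.
move=> v Hv.
have : v = 0 \/ v = 1 \/ v = 2 by lia.
by case=> [->|[->|->]]; [exists 0 | exists 1 | exists 2]; split.
Qed.

Lemma grow j : exists Q, Inv (2 * j + 2) Q /\ j + 3 <= Q.
Proof.
elim: j => [|j [Q [HI HQ]]]; first by exists 3; split=> //; exact: base.
have n2 : 2 <= 2 * j + 2 by lia.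
have e : 2 * j.+1 + 2 = (2 * j + 2).+2 by lia.
rewrite e.
case: (classic (used (2 * j + 2) Q)) => U.
- have I1 := (proj1 (step _ _ n2 HI)) U.
  have n2' : 2 <= (2 * j + 2).+1 by lia.
  case: (classic (used (2 * j + 2).+1 Q.+1)) => U'.
    by exists Q.+2; split; [exact: (proj1 (step _ _ n2' I1)) U' | lia].
  by exists Q.+1; split; [exact: (proj2 ((proj2 (step _ _ n2' I1)) U')) | lia].
- have [E I1] := (proj2 (step _ _ n2 HI)) U.
  have n2' : 2 <= (2 * j + 2).+1 by lia.
  have U' : used (2 * j + 2).+1 Q by exists (2 * j + 2).+1.
  by exists Q.+1; split; [exact: (proj1 (step _ _ n2' I1)) U' | lia].
Qed.

Lemma surj y : exists i, a i == y.
Proof.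
have [Q [[_ [_ Hus]] HQ]] := grow y.
have [i [_ Hi]] := Hus y ltac:(lia).
by exists i; apply/eqP.
Qed.

Lemma inj : injective a.
Proof.
have [H0 [H1 Hs]] := Ha.
have key : forall i j, i < j -> a i <> a j.
  move=> i j ij; case: j ij => [//|[|j]] ij.
    by have -> : i = 0 by [lia]; rewrite H0 H1.
  have [[Hne _] _] := Hs j.+1 isT.
  by move=> E; apply: (Hne i); [lia | rewrite E].
move=> i j E; case: (ltngtP i j) => // h.
  by case: (key _ _ h).
by case: (key _ _ h).
Qed.

Lemma bij : bijective a.
Proof.
exists (fun y => ex_minn (surj y)).
  move=> x; case: ex_minnP => m /eqP Hm _; exact: inj.
by move=> y; case: ex_minnP => m /eqP Hm _.
Qed.
End Q.

Theorem theorem9 :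
  (exists a : nat -> nat, IsQuet a) /\
  (forall a : nat -> nat, IsQuet a -> bijective a).
Proof.
split; first by exists qa; exact: qa_quet.
by move=> a Ha; exact: bij Ha.
Qed.
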